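(* Let $p, m$ be positive integers with $m \le p$, let $\eta > 0$, let $F_{\mathrm{new}}, F_{\mathrm{old}} \in \mathbb{R}^{p\times p}$ be symmetric positive definite matrices, let $g \in \mathbb{R}^p$, and let $G = [g_1,\ldots,g_m] \in \mathbb{R}^{p\times m}$ have full column rank. For $u, w \in \mathbb{R}^p$ write $\|w\|_{F_{\mathrm{new}}} = \sqrt{w^\top F_{\mathrm{new}} w}$. Consider the constrained problem $$\min_{u\in\mathbb{R}^p} \ \| g - F_{\mathrm{new}}^{-1} u\|_{F_{\mathrm{new}}}^2 \quad \text{subject to} \quad F_{\mathrm{old}}^{-1} u \in \operatorname{Col}(G),$$ let $u^*$ be a minimizer, and suppose $c>0$ is such that $v^* = c\,F_{\mathrm{new}}^{-1}(g-u^* )$ satisfies $\|v^*\|_{F_{\mathrm{new}}} = \eta$ (this $v^*$ is called the FOPNG update). Then $$v^* = \eta\,\frac{F_{\mathrm{new}}^{-1} P g}{\sqrt{g^\top P^\top F_{\mathrm{new}}^{-1} P g}},$$ where $$P = I - F_{\mathrm{old}} G\left(G^\top F_{\mathrm{old}} F_{\mathrm{new}}^{-1} F_{\mathrm{old}} G\right)^{-1} G^\top F_{\mathrm{old}}.$$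
   Context: In the paper's setting, $\theta\in\mathbb{R}^p$ are model parameters, $g$ is the gradient of the new-task loss, the columns of $G$ are stored gradients from previous tasks, and $F_{\mathrm{new}}$, $F_{\mathrm{old}}$ are Fisher information matrices $\mathbb{E}_{x}\mathbb{E}_{y\sim p_\theta(\cdot|x)}[\nabla_\theta \log p_\theta(y|x)\nabla_\theta \log p_\theta(y|x)^\top]$ computed on new-task and previous-task data respectively. The paper's regularity assumptions are: the score function exists with finite second moments, $F_{\mathrm{new}}$ is positive definite, and $G$ has full column rank. $\operatorname{Col}(G)$ denotes the column space of $G$. *)

(* Defs.v *)
From HB Require Import structures.
From mathcomp Require Import all_boot all_order all_algebra.
From mathcomp Require Import reals.
Set Implicit Arguments. Unset Strict Implicit. Unset Printing Implicit Defensive.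
Import Order.TTheory GRing.Theory Num.Theory.
Local Open Scope ring_scope.

Definition quadf (R : realType) (p : nat) (A : 'M[R]_p) (x : 'cV[R]_p) : R :=
  (x^T *m A *m x) ord0 ord0.

Definition spd (R : realType) (p : nat) (A : 'M[R]_p) : Prop :=
  A^T = A /\ forall x : 'cV[R]_p, x != 0 -> 0 < quadf A x.

Definition Fnorm (R : realType) (p : nat) (F : 'M[R]_p) (w : 'cV[R]_p) : R :=
  Num.sqrt (quadf F w).

Definition in_col (R : realType) (p m : nat) (G : 'M[R]_(p, m)) (w : 'cV[R]_p) : Prop :=
  exists a : 'cV[R]_m, w = G *m a.

(* Main.v *)
Require Import Defs.
From HB Require Import structures.
From mathcomp Require Import all_boot all_order all_algebra.
From mathcomp Require Import reals.
From mathcomp Require Import ring lra.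
Import Order.TTheory GRing.Theory Num.Theory.
Local Open Scope ring_scope.
Set Implicit Arguments. Unset Strict Implicit.

Lemma tr11 (R : realType) (X : 'M[R]_1) : X^T = X.
Proof. by apply/matrixP => i j; rewrite !ord1 mxE. Qed.

Lemma quadf0 (R : realType) n (A : 'M[R]_n) : quadf A 0 = 0.
Proof. by rewrite /quadf mulmx0 mxE. Qed.

Lemma pd_ge0 (R : realType) n (A : 'M[R]_n) :
  (forall x, x != 0 -> 0 < quadf A x) -> forall x, 0 <= quadf A x.
Proof.
by move=> H x; case: (eqVneq x 0) => [->|/H/ltW//]; rewrite quadf0.
Qed.

Lemma pd_unit (R : realType) n (A : 'M[R]_n) :
  (forall x, x != 0 -> 0 < quadf A x) -> A \in unitmx.
Proof.
move=> H; rewrite -row_free_unit -kermx_eq0; apply/eqP/row_matrixP => i.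
rewrite row0; set u := row i (kermx A).
have uA : u *m A = 0 by rewrite /u -row_mul mulmx_ker row0.
apply/eqP; apply: contraT => nz.
have : 0 < quadf A u^T by apply: H; rewrite trmx_eq0.
by rewrite /quadf trmxK uA mul0mx mxE ltxx.
Qed.

Lemma expand (R : realType) n (F : 'M[R]_n) (r y : 'cV[R]_n) : F^T = F ->
 quadf F (r - y) = quadf F r - 2 * (r^T *m F *m y) ord0 ord0 + quadf F y.
Proof.
move=> FT; have tB : (r - y)^T = r^T - y^T by rewrite linearB.
rewrite /quadf tB !mulmxBl !mulmxBr.
have -> : y^T *m F *m r = (r^T *m F *m y)^T by rewrite !trmx_mul trmxK FT mulmxA.
rewrite tr11.
move: (r^T *m F *m r) (r^T *m F *m y) (y^T *m F *m y) => a b d.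
rewrite !mxE; ring.
Qed.

Lemma quadfZ (R : realType) n (F : 'M[R]_n) (c : R) (x : 'cV[R]_n) :
  quadf F (c *: x) = c ^+ 2 * quadf F x.
Proof.
have tZ : (c *: x)^T = c *: x^T by rewrite linearZ.
rewrite /quadf tZ -scalemxAl -scalemxAl -scalemxAr !mxE.
by rewrite mulrA expr2.
Qed.

Theorem theorem3 (R : realType) (p m : nat) (eta : R)
  (Fnew Fold : 'M[R]_p) (g : 'cV[R]_p) (G : 'M[R]_(p, m))
  (u_star v_star : 'cV[R]_p) (c : R) :
  (0 < m)%N -> (m <= p)%N -> 0 < eta ->
  spd Fnew -> spd Fold -> \rank G = m ->
  (* u_star minimizes ||g - Fnew^-1 u||_Fnew^2 subject to Fold^-1 u in Col(G) *)
  in_col G (invmx Fold *m u_star) ->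
  (forall u : 'cV[R]_p, in_col G (invmx Fold *m u) ->
     Fnorm Fnew (g - invmx Fnew *m u) ^+ 2
       >= Fnorm Fnew (g - invmx Fnew *m u_star) ^+ 2) ->
  0 < c ->
  v_star = c *: (invmx Fnew *m (g - u_star)) ->
  Fnorm Fnew v_star = eta ->
  let P : 'M[R]_p := 1%:M - Fold *m G *m
      invmx (G^T *m Fold *m invmx Fnew *m Fold *m G) *m G^T *m Fold in
  v_star = (eta / Num.sqrt ((g^T *m P^T *m invmx Fnew *m P *m g) ord0 ord0))
             *: (invmx Fnew *m P *m g).
Proof.
move=> m0 mp eta0 [FnT Fnpd] [FoT Fopd] rkG [a0 Ha0] Hmin c0 Hv Hn P.
rewrite /P; clear P.
set A := invmx Fnew.
have Fnu : Fnew \in unitmx := pd_unit Fnpd.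
have Fou : Fold \in unitmx := pd_unit Fopd.
have AT : A^T = A by rewrite /A trmx_inv FnT.
have FA : Fnew *m A = 1%:M by rewrite /A mulmxV.
have qA : forall x : 'cV[R]_p, quadf A x = quadf Fnew (A *m x).
  move=> x; rewrite /quadf trmx_mul AT -!mulmxA (mulmxA Fnew) FA mul1mx.
  by [].
have Apd : forall x : 'cV[R]_p, x != 0 -> 0 < quadf A x.
  move=> x nz; rewrite qA; apply: Fnpd; apply: contra nz => /eqP Ax0.
  by rewrite -(mulKVmx Fnu x) -/A Ax0 mulmx0.
set B := Fold *m G.
have BT : B^T = G^T *m Fold by rewrite /B trmx_mul FoT.
have rowG : row_free G^T by rewrite /row_free mxrank_tr rkG.
have Binj : forall d : 'cV[R]_m, B *m d = 0 -> d = 0.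
  move=> d; rewrite /B -mulmxA => /(congr1 (mulmx (invmx Fold))).
  rewrite mulKmx // mulmx0 => Gd.
  apply: trmx_inj; rewrite trmx0; apply: (row_free_inj rowG).
  by rewrite mul0mx -trmx_mul Gd trmx0.
set M := B^T *m A *m B.
have ME : G^T *m Fold *m A *m Fold *m G = M by rewrite /M BT /B !mulmxA.
have qM : forall d : 'cV[R]_m, quadf M d = quadf A (B *m d).
  by move=> d; rewrite /quadf /M /B !trmx_mul !mulmxA.
have Mpd : forall d : 'cV[R]_m, d != 0 -> 0 < quadf M d.
  move=> d nz; rewrite qM; apply: Apd; apply: contra nz.
  by move/eqP/Binj ->.
have Mu : M \in unitmx := pd_unit Mpd.
have MA : forall x : 'cV[R]_m, B^T *m (A *m (B *m x)) = M *m x.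
  by move=> x; rewrite /M !mulmxA.
set as_ := invmx M *m (B^T *m g).
have ustar : u_star = B *m a0.
  by rewrite -(mulKVmx Fou u_star) Ha0 /B -mulmxA.
have key : forall d : 'cV[R]_m, quadf Fnew (g - A *m (B *m (as_ + d)))
    = quadf Fnew (g - A *m (B *m as_)) + quadf M d.
  move=> d; rewrite mulmxDr mulmxDr opprD addrA expand //.
  have cross : (g - A *m (B *m as_))^T *m Fnew *m (A *m (B *m d)) = 0.
    rewrite -mulmxA (mulmxA Fnew) FA mul1mx mulmxA.
    have -> : (g - A *m (B *m as_))^T *m B = (B^T *m (g - A *m (B *m as_)))^T.
      by rewrite trmx_mul trmxK.
    rewrite mulmxBr MA /as_ mulKVmx // subrr trmx0.
    by rewrite mul0mx.
  by rewrite cross mxE mulr0 subr0 qM qA.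
have Fn2 : forall x : 'cV[R]_p, Fnorm Fnew x ^+ 2 = quadf Fnew x.
  by move=> x; rewrite /Fnorm sqr_sqrtr // pd_ge0.
have Hle := Hmin (B *m as_).
rewrite !Fn2 ustar in Hle.
have Hle' : quadf Fnew (g - A *m (B *m a0)) <= quadf Fnew (g - A *m (B *m as_)).
  by apply: Hle; exists as_; rewrite /B -mulmxA mulKmx.
have d0 : a0 - as_ = 0.
  apply/eqP; apply: contraT => nz.
  have := Mpd _ nz.
  have := key (a0 - as_); rewrite (addrC as_) subrK => E.
  rewrite E in Hle'; lra.
move/eqP: d0; rewrite subr_eq0 => /eqP a0E.
have gu : g - u_star = (1%:M - Fold *m G *m
      invmx (G^T *m Fold *m A *m Fold *m G) *m G^T *m Fold) *m g.
  rewrite ustar a0E /as_ ME mulmxBl mul1mx.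
  by rewrite BT /B !mulmxA.
rewrite gu in Hv.
set P := (1%:M - _).
rewrite -/P in Hv.
set q := (g^T *m P^T *m A *m P *m g) ord0 ord0.
have qE : quadf Fnew (A *m (P *m g)) = q.
  rewrite /q /quadf !trmx_mul AT -!mulmxA (mulmxA Fnew) FA mul1mx.
  by [].
have Hq : Fnorm Fnew v_star = c * Num.sqrt q.
  rewrite /Fnorm Hv quadfZ qE sqrtrM ?sqrtr_sqr ?ger0_norm //.
  - exact: ltW.
  - by rewrite exprn_ge0 // ltW.
have q0 : 0 < Num.sqrt q.
  rewrite lt_neqAle sqrtr_ge0 andbT; apply/negP => /eqP q0.
  by move: Hn; rewrite Hq -q0 mulr0 => e0; move: eta0; rewrite -e0 ltxx.
rewrite Hv -mulmxA; congr (_ *: _).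
rewrite -Hn Hq; field.
by rewrite gt_eqF.
Qed.
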